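(* Let $G$ be a strongly connected digraph with $n\geq 2$ vertices. (1) If $G$ contains an $m$-wheel for some $m\geq 1$, then $G$ admits a boolean nilpotent function of class at most $2n-m+1$. (2) If $G$ has a loop, then $G$ admits a boolean nilpotent function of class at most $2n-1$.
   Context: Digraphs may have loops but no multiple arcs. For $m\geq 1$, the $m$-wheel $W_m$ is the digraph obtained from a directed cycle $C_m$ of length $m$ (for $m=1$, a single vertex with a loop) by adding a new vertex $v$ (the center) and an arc from $v$ to every vertex of $C_m$; $G$ contains an $m$-wheel if some subgraph of $G$ is isomorphic to $W_m$. A boolean function on $[n]$ is a map $f:\{0,1\}^n\to\{0,1\}^n$; its (unsigned) interaction graph has an arc $(j,i)$ iff $f_i$ depends essentially on $x_j$, i.e. $f_i(a)\neq f_i(b)$ for some $a,b$ differing only in coordinate $j$. $G$ admits $f$ if the interaction graph of $f$ equals $G$. $f$ is nilpotent if $f^k$ is constant for some $k\geq 0$ ($f^0=\mathrm{id}$); the least such $k$ is its class. *)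

(* Defs.v *)
From mathcomp Require Import all_boot.
Set Implicit Arguments. Unset Strict Implicit. Unset Printing Implicit Defensive.

(* A digraph on vertex set [n] = 'I_n, loops allowed, no multiple arcs:
   G : rel 'I_n, with G u v meaning there is an arc (u,v). *)

Definition config (n : nat) := {ffun 'I_n -> bool}.

Definition bfun (n : nat) := config n -> config n.

Definition depends (n : nat) (f : bfun n) (j i : 'I_n) : Prop :=
  exists a b : config n,
    (forall l, l != j -> a l = b l) /\ f a i != f b i.

Definition admits (n : nat) (G : rel 'I_n) (f : bfun n) : Prop :=
  forall j i : 'I_n, G j i <-> depends f j i.

Definition strongly_connected (n : nat) (G : rel 'I_n) : Prop :=
  forall u v : 'I_n, connect G u v.

(* Cycle vertices c 0, ..., c (m-1) with arcs c k -> c (k+1 mod m)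
   (a loop when m = 1), and a center v distinct from them with arcs v -> c k. *)
Definition contains_wheel (n : nat) (G : rel 'I_n) (m : nat) : Prop :=
  exists (v : 'I_n) (c : 'I_m -> 'I_n),
    injective c /\ (forall k, c k != v) /\
    (forall k, G (c k) (c (ordS k))) /\ (forall k, G v (c k)).

Definition has_loop (n : nat) (G : rel 'I_n) : Prop := exists u, G u u.

Definition is_constant (n : nat) (g : bfun n) : Prop :=
  exists y : config n, forall x, g x = y.

(* f is nilpotent of class at most b: f^k constant for some k <= b
   (the least such k, the class, is then <= b). *)
Definition nilpotent_class_le (n : nat) (f : bfun n) (b : nat) : Prop :=
  exists k, k <= b /\ is_constant (iter k f).

(* Main.v *)
Require Import Defs.
From mathcomp Require Import all_boot zify.
Set Implicit Arguments. Unset Strict Implicit. Unset Printing Implicit Defensive.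


Definition good n (G : rel 'I_n) (e : 'I_n * 'I_n) : rel 'I_n :=
  fun a b => G a b && ((a, b) != e).

Definition fnet n (G : rel 'I_n) (e : 'I_n * 'I_n) : bfun n :=
  fun x => [ffun i => [forall j, G j i ==> (x j == ((j, i) != e))]].

Lemma fnet_admits n (G : rel 'I_n) e : admits G (fnet G e).
Proof.
move=> j i; split.
- move=> Gji.
  pose a : config n := [ffun k => (k, i) != e].
  pose b : config n := [ffun k => if k == j then ~~ ((k, i) != e) else (k, i) != e].
  exists a, b; split.
    by move=> l /negbTE lj; rewrite /a /b !ffunE lj.
  rewrite /fnet !ffunE.
  have -> : [forall j0, G j0 i ==> (a j0 == ((j0, i) != e))].
    by apply/forallP => k; rewrite /a ffunE eqxx implybT.
  apply/negP => /forallP /(_ j); rewrite Gji /b ffunE eqxx /=.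
  by case: ((j, i) != e).
- case Gji: (G j i) => //.
  move=> [a [b [ab]]]; rewrite /fnet !ffunE.
  suff -> : [forall j0, G j0 i ==> (a j0 == ((j0, i) != e))] =
            [forall j0, G j0 i ==> (b j0 == ((j0, i) != e))] by rewrite eqxx.
  apply: eq_forallb => k; case Gki: (G k i) => //=.
  rewrite ab //; apply/eqP => kj; by rewrite kj Gji in Gki.
Qed.

Lemma fnet_good0 n (G : rel 'I_n) e (x : config n) a b :
  good G e a b -> x a = false -> fnet G e x b = false.
Proof.
case/andP => Gab abe xa; rewrite /fnet ffunE.
apply/negP => /forallP /(_ a); by rewrite Gab xa abe.
Qed.

Lemma fnet_bad n (G : rel 'I_n) e (x : config n) a b :
  G a b -> (a, b) = e -> x a = true -> fnet G e x b = false.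
Proof.
move=> Gab abe xa; rewrite /fnet ffunE.
apply/negP => /forallP /(_ a); by rewrite Gab xa abe eqxx.
Qed.

Lemma fnet_relay n (G : rel 'I_n) e (x : config n) a b :
  (forall j, G j b = (j == a)) -> (a, b) != e -> fnet G e x b = x a.
Proof.
move=> Hb abe; rewrite /fnet ffunE.
apply/idP/idP.
  by move/forallP/(_ a); rewrite Hb eqxx abe /= => /eqP.
move=> xa; apply/forallP => k; rewrite Hb; apply/implyP => /eqP ->.
by rewrite xa abe.
Qed.

Definition tr n (f : bfun n) (x : config n) t := iter t f x.

Lemma trS n (f : bfun n) x t : tr f x t.+1 = f (tr f x t).
Proof. by []. Qed.

Lemma tr_path0 n (G : rel 'I_n) e (x : config n) p a t :
  path (good G e) a p -> tr (fnet G e) x t a = false ->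
  tr (fnet G e) x (t + size p) (last a p) = false.
Proof.
elim: p a t => [|c p IH] a t /=; first by rewrite addn0.
case/andP => gac pc xa; rewrite addnS -addSn; apply: IH => //.
by rewrite trS; apply: fnet_good0 gac xa.
Qed.

Lemma tr_path_persist n (G : rel 'I_n) e (x : config n) p a T :
  path (good G e) a p -> (forall t, T <= t -> tr (fnet G e) x t a = false) ->
  forall t, T + size p <= t -> tr (fnet G e) x t (last a p) = false.
Proof.
elim: p a T => [|c p IH] a T /=; first by move=> _ H t; rewrite addn0; apply: H.
case/andP => gac pc H t; rewrite addnS -addSn => Ht; apply: (IH c T.+1) => // s Ts.
case: s Ts => // s Ts; rewrite trS; apply: fnet_good0 gac _; exact: H.
Qed.

Lemma uniq_size n (s : seq 'I_n) : uniq s -> size s <= n.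
Proof. move/card_uniqP <-; apply: leq_trans (max_card _) _; by rewrite card_ord. Qed.

Lemma short_path n (r : rel 'I_n) a b :
  connect r a b -> exists p, [/\ path r a p, last a p = b & uniq (a :: p)].
Proof.
case/connectP => p pp ->.
case: (shortenP pp) => p' pp' up' _; by exists p'.
Qed.


Fixpoint rk n (R : rel 'I_n) k a b : bool :=
  if k is k'.+1 then rk R k' a b || [exists c, rk R k' a c && R c b] else a == b.

Lemma rk_le n (R : rel 'I_n) k k' a b : k <= k' -> rk R k a b -> rk R k' a b.
Proof.
move=> kk'; rewrite -(subnKC kk'); elim: (k' - k) => [|d IH]; first by rewrite addn0.
by move=> h; rewrite addnS /= IH.
Qed.

Lemma rk_cons n (R : rel 'I_n) k a x b : R a x -> rk R k x b -> rk R k.+1 a b.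
Proof.
move=> Rax; elim: k b => [|k IH] b.
  by move/eqP => <- /=; apply/orP; right; apply/existsP; exists a; rewrite eqxx.
move=> hk; change (is_true (rk R k x b || [exists c, rk R k x c && R c b])) in hk.
case/orP: hk => [h|/existsP [c /andP [h Rcb]]].
  by apply: (@rk_le _ _ k.+1) => //; apply: IH.
change (is_true (rk R k.+1 a b || [exists c, rk R k.+1 a c && R c b])).
by apply/orP; right; apply/existsP; exists c; rewrite (IH _ h).
Qed.

Lemma rk_path n (R : rel 'I_n) a p : path R a p -> rk R (size p) a (last a p).
Proof.
elim: p a => [|x p IH] a /=; first by rewrite eqxx.
by case/andP => Rax px; apply: rk_cons Rax (IH _ px).
Qed.

Lemma rk_connect n (R : rel 'I_n) k a b : rk R k a b -> connect R a b.
Proof.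
elim: k b => [|k IH] b /=; first by move/eqP ->.
case/orP => [/IH //|/existsP [c /andP [/IH h Rcb]]].
exact: connect_trans h (connect1 Rcb).
Qed.

Lemma connect_rk n (R : rel 'I_n) a b : connect R a b -> exists2 k, k < n & rk R k a b.
Proof.
case/short_path => p [pp lp up]; exists (size p).
  by have := uniq_size up.
by rewrite -lp; apply: rk_path.
Qed.

Definition dist n (R : rel 'I_n) a b := find (fun k => rk R k a b) (iota 0 n).

Lemma dist_has n (R : rel 'I_n) a b : connect R a b -> has (fun k => rk R k a b) (iota 0 n).
Proof.
case/connect_rk => k kn h; apply/hasP; exists k => //; by rewrite mem_iota.
Qed.

Lemma dist_lt n (R : rel 'I_n) a b : connect R a b -> dist R a b < n.
Proof. by move/dist_has; rewrite has_find size_iota. Qed.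

Lemma dist_rk n (R : rel 'I_n) a b : connect R a b -> rk R (dist R a b) a b.
Proof.
move=> h; have := nth_find 0 (dist_has h); rewrite nth_iota ?add0n //.
exact: dist_lt.
Qed.

Lemma dist_min n (R : rel 'I_n) k a b : rk R k a b -> dist R a b <= k.
Proof.
move=> h; case: (ltnP k n) => kn.
  rewrite leqNgt; apply/negP => /(before_find 0); by rewrite nth_iota ?add0n // h.
apply: leq_trans _ kn; have := find_size (fun k => rk R k a b) (iota 0 n).
by rewrite size_iota.
Qed.

Lemma dist_eq0 n (R : rel 'I_n) a b : connect R a b -> (dist R a b == 0) = (a == b).
Proof.
move=> h; apply/idP/idP.
  by move/eqP => d0; have := dist_rk h; rewrite d0.
move=> ab; rewrite -leqn0; apply: (@dist_min _ _ 0) => /=; exact: ab.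
Qed.

Lemma dist_prv n (R : rel 'I_n) a b :
  connect R a b -> a != b ->
  exists c, [/\ R c b, connect R a c & dist R a c < dist R a b].
Proof.
move=> h ab; have := dist_rk h; have := dist_eq0 h; rewrite (negbTE ab).
case E: (dist R a b) => [//|d] _ /= /orP [hd|/existsP [c /andP [hc Rcb]]].
  by have := dist_min hd; rewrite E ltnn.
exists c; split => //; first exact: rk_connect hc.
by rewrite ltnS; apply: dist_min.
Qed.


Lemma suffix_out (T : eqType) (r : rel T) (P : pred T) a p :
  path r a p -> all (fun y => ~~ P y) p \/
  exists a' p', [/\ P a', path r a' p', last a' p' = last a p,
                    all (fun y => ~~ P y) p' & subseq p' p].
Proof.
elim: p a => [|x p IH] a /=; first by left.
case/andP => rax px.
case: (IH x px) => [allp | [a' [p' [Pa' pp' la' allp' sub]]]].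
- case Px: (P x).
  + right; exists x, p; split => //; exact: subseq_cons.
  + by left; rewrite allp.
- right; exists a', p'; split => //.
  exact: subseq_trans sub (subseq_cons p x).
Qed.

Lemma size_out n (P : pred 'I_n) (s : seq 'I_n) :
  uniq s -> all (fun y => ~~ P y) s -> size s <= n - #|P|.
Proof.
move=> us als; rewrite -(card_uniqP us).
have H := cardC P; rewrite card_ord in H.
have : #|s| <= #|[predC P]|.
  apply: subset_leq_card; apply/subsetP => y ys; rewrite inE.
  exact: (allP als).
move: H; set a := #|P|; set b := #|[predC P]|; set c := #|s|; lia.
Qed.

Lemma out_path n (G : rel 'I_n) (P : pred 'I_n) a w :
  P a -> ~~ P w -> connect G a w ->
  exists a' p, [/\ P a', path G a' p, last a' p = w,
                   all (fun y => ~~ P y) p & size p <= n - #|P|].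
Proof.
move=> Pa Pw /short_path [p [pp lp up]].
case: (suffix_out P pp) => [allp | [a' [p' [Pa' pp' la' allp' sub]]]].
  exists a, p; split => //; apply: size_out => //; by case/andP: up.
exists a', p'; split => //; first by rewrite la'.
apply: size_out => //; apply: subseq_uniq sub _; by case/andP: up.
Qed.

Lemma path_good_out n (G : rel 'I_n) (P : pred 'I_n) e a p :
  P e.2 -> path G a p -> all (fun y => ~~ P y) p -> path (good G e) a p.
Proof.
move=> Pe; elim: p a => [|x p IH] a //=.
case/andP => Gax px /andP [Px allp]; rewrite IH // andbT /good Gax /=.
apply/eqP => axe; move: Pe; rewrite -axe /= => Pe; by rewrite Pe in Px.
Qed.

Lemma iter_ordS_val m (a : 'I_m) i : val (iter i (@ordS m) a) = (a + i) %% m.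
Proof.
elim: i => [|i IH] /=; first by rewrite addn0 modn_small.
by rewrite IH -addn1 modnDml -addnA addn1.
Qed.

Lemma iter_ordS_reach m (a b : 'I_m) : exists2 i, i < m & iter i (@ordS m) a = b.
Proof.
have mpos : 0 < m by case: m a {b} => [[]|].
exists ((b + m - a) %% m); first by rewrite ltn_mod.
apply/val_inj; rewrite iter_ordS_val modnDmr.
have -> : a + (b + m - a) = b + m by have := ltn_ord a; lia.
by rewrite modnDr modn_small.
Qed.

Lemma ordS_neq m (k : 'I_m) : 2 <= m -> ordS k != k.
Proof.
move=> hm; apply/eqP => /(congr1 val) /= h; move: h.
have hk := ltn_ord k.
case: (ltngtP k.+1 m) => h'; [rewrite modn_small // ; lia | lia | rewrite h' modnn; lia].
Qed.

Lemma wheel_part n (G : rel 'I_n) m :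
  2 <= m -> strongly_connected G -> contains_wheel G m ->
  exists f : bfun n, admits G f /\ nilpotent_class_le f (2 * n - m + 1).
Proof.
move=> hm SC [v [c [injc [cv [cyc spk]]]]].
have mpos : 0 < m by lia.
pose P : pred 'I_n := fun y => y \in codom c.
have cardP : #|P| = m.
  rewrite /P -[RHS](card_ord m) -(card_codom injc); exact: eq_card.
have Pc k : P (c k) by rewrite /P codom_f.
have Pv : ~~ P v.
  by apply/negP => /codomP [k vk]; move: (cv k); rewrite vk eqxx.
have mn : m <= n by rewrite -cardP; apply: leq_trans (max_card _) _; rewrite card_ord.
pose k0 : 'I_m := Ordinal mpos.
have [j [p0 [Pj pp0 lp0 allp0 sp0]]] := out_path (Pc k0) Pv (SC (c k0) v).
case/codomP: Pj => j0 jj0; subst j.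
pose l := size p0.
pose b := iter l.+1 (@ordS m) j0.
pose e := (v, c b).
exists (fnet G e); split; first exact: fnet_admits.
have Pe : P e.2 by apply: Pc.
have gp0 : path (good G e) (c j0) p0 := path_good_out Pe pp0 allp0.
exists (2 * n - m + 1); split => //.
exists [ffun _ => false] => x.
pose Z t := tr (fnet G e) x t.
have A1 t k : Z t (c k) = false -> Z t.+1 (c (ordS k)) = false.
  move=> h; rewrite /Z trS; apply: fnet_good0 h.
  rewrite /good cyc /=; apply/eqP => [[ckv _]]; by move: (cv k); rewrite ckv eqxx.
have A1i i t k : Z t (c k) = false -> Z (t + i) (c (iter i (@ordS m) k)) = false.
  elim: i t k => [|i IH] t k h; first by rewrite addn0.
  by rewrite addnS /=; apply: A1; apply: IH.
have A2 t k : k != b -> Z t v = false -> Z t.+1 (c k) = false.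
  move=> kb h; rewrite /Z trS; apply: fnet_good0 h.
  rewrite /good spk /=; apply/eqP => [[ckb]]; move/injc: ckb => ckb.
  by rewrite ckb eqxx in kb.
have A3 t : Z t v = true -> Z t.+1 (c b) = false.
  by move=> h; rewrite /Z trS; apply: fnet_bad h.
have A4 t : Z t (c j0) = false -> Z (t + l) v = false.
  by move=> h; rewrite -lp0; apply: tr_path0.
have absorb s : Z s (c j0) = false -> forall k, Z (s + l).+1 (c k) = false.
  move=> h k; case: (eqVneq k b) => [->|kb].
    by rewrite -addnS; apply: A1i.
  by apply: A2 => //; apply: A4.
have [s sm Zs] : exists2 s, s <= m & Z s (c j0) = false.
  case Zv: (Z 0 v).
    have := A3 _ Zv; have [i im ib] := iter_ordS_reach b j0.
    move/(A1i i); rewrite ib => h; exists (1 + i) => //; lia.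
  pose k1 := ord_pred j0.
  have k1j : ordS k1 = j0 by rewrite ord_predK.
  case: (eqVneq k1 b) => [k1b|k1b].
    have jb : j0 != b by rewrite -k1j k1b ordS_neq.
    by exists 1 => //; apply: A2.
  exists 2 => //; rewrite -k1j; apply: A1; exact: A2.
pose T1 := (s + l).+1.
have persist d k : Z (T1 + d) (c k) = false.
  elim: d k => [|d IH] k; first by rewrite addn0; apply: absorb.
  by rewrite addnS -(ord_predK k); apply: A1.
have persist' t k : T1 <= t -> Z t (c k) = false.
  by move=> h; rewrite -(subnKC h); apply: persist.
have final t w : T1 + (n - m) <= t -> Z t w = false.
  move=> ht; case Pw: (P w).
    case/codomP: Pw => k ->; apply: persist'; lia.
  have [a [q [Pa pq lq allq sq]]] := out_path (Pc k0) (negbT Pw) (SC (c k0) w).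
  case/codomP: Pa => ka aka; subst a.
  rewrite -lq; apply: (tr_path_persist (T := T1)).
  - exact: path_good_out Pe pq allq.
  - by move=> t' h; apply: persist'.
  - rewrite cardP in sq; lia.
apply/ffunP => w; rewrite ffunE; apply: final.
rewrite cardP in sp0; rewrite /T1 /l; lia.
Qed.


Definition indeg n (G : rel 'I_n) b := #|[set a | G a b]|.
Definition nonrelay n (G : rel 'I_n) b := indeg G b != 1.
Definition GT n (G : rel 'I_n) : rel 'I_n := fun a b => G b a.
Definition prv n (G : rel 'I_n) r b :=
  odflt b [pick c | G c b && (dist G r c < dist G r b)].
Definition nxt n (G : rel 'I_n) r a :=
  odflt a [pick c | G a c && (dist (GT G) r c < dist (GT G) r a)].
Definition kk n (G : rel 'I_n) r a :=
  (find (fun i => nonrelay G (iter i.+1 (nxt G r) a)) (iota 0 n)).+1.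
Definition exarc n (G : rel 'I_n) r a :=
  (iter (kk G r a).-1 (nxt G r) a, iter (kk G r a) (nxt G r) a).

Lemma connectT n (G : rel 'I_n) a b : connect G a b -> connect (GT G) b a.
Proof.
move=> h; have := connect_rev G b a; rewrite /= h => h'.
by apply: etrans h'; apply: eq_connect.
Qed.

Lemma prv_spec n (G : rel 'I_n) r b :
  strongly_connected G -> b != r ->
  G (prv G r b) b /\ dist G r (prv G r b) < dist G r b.
Proof.
move=> SC br; rewrite /prv; case: pickP => [c /andP [] //|none].
have rb : r != b by rewrite eq_sym.
have [c [Gcb _ dc]] := dist_prv (SC r b) rb.
by move: (none c); rewrite Gcb dc.
Qed.

Lemma nxt_spec n (G : rel 'I_n) r a :
  strongly_connected G -> a != r ->
  G a (nxt G r a) /\ dist (GT G) r (nxt G r a) < dist (GT G) r a.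
Proof.
move=> SC ar; rewrite /nxt; case: pickP => [c /andP [] //|none].
have ra : r != a by rewrite eq_sym.
have [c [Gca _ dc]] := dist_prv (connectT (SC a r)) ra.
by move: (none c); rewrite /GT in Gca *; rewrite Gca dc.
Qed.

Lemma nxt_r n (G : rel 'I_n) r : nxt G r r = r.
Proof.
have d0 : dist (GT G) r r = 0.
  by apply/eqP; rewrite -leqn0; apply: (@dist_min _ _ 0); rewrite /= eqxx.
rewrite /nxt; case: pickP => [c /andP [_]|//]; by rewrite d0 ltn0.
Qed.

Lemma dnx0 n (G : rel 'I_n) r a : strongly_connected G ->
  (dist (GT G) r a == 0) = (a == r).
Proof. by move=> SC; rewrite dist_eq0; [exact: eq_sym | apply: connectT]. Qed.

Lemma dnx_nxt_le n (G : rel 'I_n) r a : strongly_connected G ->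
  dist (GT G) r (nxt G r a) <= dist (GT G) r a.
Proof.
move=> SC; case: (eqVneq a r) => [->|ar]; first by rewrite nxt_r.
by apply: ltnW; case: (nxt_spec SC ar).
Qed.

Lemma dnx_iter_le n (G : rel 'I_n) r a k : strongly_connected G ->
  dist (GT G) r (iter k (nxt G r) a) <= dist (GT G) r a.
Proof.
move=> SC; elim: k => [|k IH] //=; apply: leq_trans _ IH; exact: dnx_nxt_le.
Qed.

Lemma dnx_iter_lt n (G : rel 'I_n) r a k : strongly_connected G -> a != r ->
  dist (GT G) r (iter k.+1 (nxt G r) a) < dist (GT G) r a.
Proof.
move=> SC ar; rewrite iterSr.
have h1 := @dnx_iter_le n G r (nxt G r a) k SC.
apply: leq_ltn_trans h1 _; by case: (nxt_spec SC ar).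
Qed.

Lemma dnx_r n (G : rel 'I_n) r : dist (GT G) r r = 0.
Proof. by apply/eqP; rewrite -leqn0; apply: (@dist_min _ _ 0); rewrite /= eqxx. Qed.

Lemma iter_nxt_fix n (G : rel 'I_n) r k : iter k (nxt G r) r = r.
Proof. by elim: k => //= k ->; rewrite nxt_r. Qed.

Lemma iter_nxt_r n (G : rel 'I_n) r a : strongly_connected G ->
  iter (dist (GT G) r a) (nxt G r) a = r.
Proof.
move=> SC; have H k : forall b, dist (GT G) r b <= k -> iter (dist (GT G) r b) (nxt G r) b = r.
  elim: k => [|k IH] b hb.
    by move: hb; rewrite leqn0 dnx0 // => /eqP ->; rewrite dnx_r.
  case: (eqVneq b r) => [->|br]; first by rewrite dnx_r.
  have [_ hlt] := nxt_spec SC br.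
  case E: (dist (GT G) r b) hlt => [|d] hlt; first by rewrite ltn0 in hlt.
  rewrite iterSr.
  have hd : dist (GT G) r (nxt G r b) <= d by rewrite -ltnS.
  rewrite -(subnK hd) iterD IH ?iter_nxt_fix //.
  by rewrite -ltnS (leq_trans hlt) //; rewrite E in hb.
exact: H.
Qed.

Lemma in_nb n (G : rel 'I_n) b : 2 <= n -> strongly_connected G ->
  exists a, G a b && (a != b).
Proof.
move=> hn SC.
have [c cb] : exists c : 'I_n, c != b.
  have h1 : 1 < n by [].
  pose c0 := Ordinal (ltnW h1); pose c1 := Ordinal h1.
  case: (eqVneq c0 b) => [<-|ne]; last by exists c0.
  by exists c1.
have [p [pp lp up]] := short_path (SC c b).
elim/last_ind: p pp lp up => [|p y _] pp lp up.
  by rewrite /= in lp; rewrite lp eqxx in cb.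
rewrite last_rcons in lp; subst y.
move: pp; rewrite rcons_path => /andP [_ Gl].
exists (last c p); rewrite Gl /=.
move: up; rewrite -rcons_cons rcons_uniq => /andP [bn _].
apply/eqP => lb; move: bn; rewrite -lb; by rewrite mem_last.
Qed.

Lemma indeg_pos n (G : rel 'I_n) b : 2 <= n -> strongly_connected G -> 0 < indeg G b.
Proof.
move=> hn SC; have [a /andP [Gab _]] := in_nb b hn SC.
by apply/card_gt0P; exists a; rewrite inE.
Qed.

Lemma relay_unique n (G : rel 'I_n) a b :
  ~~ nonrelay G b -> G a b -> forall j, G j b = (j == a).
Proof.
rewrite /nonrelay negbK => /cards1P [a0 h] Gab j.
have ha : a \in [set a0] by rewrite -h inE.
rewrite inE in ha; move/eqP: ha => ha; subst a0.
by have := congr1 (fun S : {set 'I_n} => j \in S) h; rewrite /= !inE.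
Qed.

Lemma nonrelay_r n (G : rel 'I_n) r : 2 <= n -> strongly_connected G -> G r r ->
  nonrelay G r.
Proof.
move=> hn SC Grr; have [a /andP [Gar ar]] := in_nb r hn SC.
rewrite /nonrelay; apply/eqP => h1.
have U : forall j, G j r = (j == r).
  by apply: relay_unique => //; rewrite /nonrelay h1.
by move: (U a); rewrite Gar (negbTE ar).
Qed.

Lemma kk_spec n (G : rel 'I_n) r a : 2 <= n -> strongly_connected G -> G r r -> a != r ->
  [/\ 0 < kk G r a, nonrelay G (iter (kk G r a) (nxt G r) a) &
      forall i, 0 < i < kk G r a -> ~~ nonrelay G (iter i (nxt G r) a)].
Proof.
move=> hn SC Grr ar.
set P := fun i => nonrelay G (iter i.+1 (nxt G r) a).
have dpos : 0 < dist (GT G) r a by rewrite lt0n dnx0.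
have dlt : dist (GT G) r a < n by apply: dist_lt; apply: connectT.
have hP : has P (iota 0 n).
  apply/hasP; exists (dist (GT G) r a).-1; first by rewrite mem_iota; lia.
  by rewrite /P prednK // iter_nxt_r // nonrelay_r.
have flt : find P (iota 0 n) < n by have := hP; rewrite has_find size_iota.
rewrite /kk -/P; split => //.
  by have := nth_find 0 hP; rewrite nth_iota ?add0n.
case=> // i /andP [_ hi]; rewrite ltnS in hi.
have := before_find 0 hi; rewrite nth_iota ?add0n; last lia.
by rewrite /P => ->.
Qed.

Lemma P1 n (G : rel 'I_n) r e : strongly_connected G -> nonrelay G e.2 ->
  (forall b, nonrelay G b -> b != r -> (prv G r b, b) != e) ->
  forall b, connect (good G e) r b.
Proof.
move=> SC Ne He.
suff H k : forall b, dist G r b <= k -> connect (good G e) r b.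
  by move=> b; apply: (H _ b (leqnn _)).
elim: k => [|k IH] b hb.
  move: hb; rewrite leqn0 dist_eq0 // => /eqP ->; exact: connect0.
case: (eqVneq b r) => [->|br]; first exact: connect0.
have [Gpb dp] := prv_spec SC br.
apply: connect_trans (IH _ _) (connect1 _); first exact: leq_trans dp hb.
rewrite /good Gpb /=.
case Nb: (nonrelay G b); first by apply: He.
apply/eqP => pe; by rewrite -pe /= Nb in Ne.
Qed.

Lemma P2 n (G : rel 'I_n) r e : 2 <= n -> strongly_connected G -> G r r ->
  nonrelay G e.2 ->
  (forall x, nonrelay G x -> x != r -> exarc G r x != e) ->
  forall x, nonrelay G x -> connect (good G e) x r.
Proof.
move=> hn SC Grr Ne He.
suff H k : forall x, dist (GT G) r x <= k -> nonrelay G x -> connect (good G e) x r.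
  by move=> x; apply: (H _ x (leqnn _)).
elim: k => [|k IH] x hx Nx.
  move: hx; rewrite leqn0 dnx0 // => /eqP ->; exact: connect0.
case: (eqVneq x r) => [->|xr]; first exact: connect0.
have [kpos Nk rel] := kk_spec hn SC Grr xr.
have walk j : j <= kk G r x -> connect (good G e) x (iter j (nxt G r) x).
  elim: j => [|j IHj] hj; first exact: connect0.
  apply: connect_trans (IHj (ltnW hj)) (connect1 _).
  have jr : iter j (nxt G r) x != r.
    case: j hj {IHj} => [|j] hj; first by [].
    apply/eqP => h; move: (rel j.+1 hj); by rewrite h nonrelay_r.
  have [Gj _] := nxt_spec SC jr.
  rewrite /good Gj /=.
  case: (ltngtP j.+1 (kk G r x)) hj => // [hlt|heq] _.
    apply/eqP => je; have := rel j.+1; rewrite hlt /= => /(_ isT).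
    by rewrite -je /= in Ne; rewrite -/(iter j.+1 _ _) /= Ne.
  have := He x Nx xr; rewrite /exarc -heq /=; by [].
apply: connect_trans (walk _ (leqnn _)) (IH _ _ Nk).
have := @dnx_iter_lt n G r x (kk G r x).-1 SC xr; rewrite prednK //.
by move=> h; rewrite -ltnS (leq_trans h).
Qed.

Definition i1 n (G : rel 'I_n) b := odflt b [pick a | G a b].
Definition i2 n (G : rel 'I_n) b := odflt b [pick a | G a b && (a != i1 G b)].

Lemma i12_spec n (G : rel 'I_n) b : 2 <= n -> strongly_connected G -> nonrelay G b ->
  [/\ G (i1 G b) b, G (i2 G b) b & i2 G b != i1 G b].
Proof.
move=> hn SC Nb.
have [a1 [a2 [G1 G2 a12]]] : exists a1 a2, [/\ G a1 b, G a2 b & a1 != a2].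
  have h : 1 < indeg G b by have := indeg_pos b hn SC; move: Nb; rewrite /nonrelay; lia.
  case/card_gt1P: h => x [y [xi yi xy]]; exists x, y; by rewrite !inE in xi yi.
have Gi1 : G (i1 G b) b.
  by rewrite /i1; case: pickP => [//|none]; move: (none a1); rewrite G1.
split => //.
  rewrite /i2; case: pickP => [c /andP [] //|none].
  case: (eqVneq a1 (i1 G b)) => [e1|ne]; last by move: (none a1); rewrite G1 ne.
  have ne2 : a2 != i1 G b by rewrite -e1 eq_sym.
  by move: (none a2); rewrite G2 ne2.
rewrite /i2; case: pickP => [c /andP [] //|none].
case: (eqVneq a1 (i1 G b)) => [e1|ne]; last by move: (none a1); rewrite G1 ne.
have ne2 : a2 != i1 G b by rewrite -e1 eq_sym.
by move: (none a2); rewrite G2 ne2.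
Qed.

Lemma exists_arc n (G : rel 'I_n) r : 2 <= n -> strongly_connected G -> G r r ->
  exists u w, [/\ G u w, nonrelay G w, (u, w) != (r, r),
     (forall b, nonrelay G b -> b != r -> (prv G r b, b) != (u, w)) &
     (forall x, nonrelay G x -> x != r -> exarc G r x != (u, w))].
Proof.
move=> hn SC Grr.
pose NR := [set b | nonrelay G b].
pose D := NR :\ r.
pose A := [set p : 'I_n * 'I_n | G p.1 p.2 && nonrelay G p.2].
pose U := [set (prv G r b, b) | b in D] :|: [set exarc G r b | b in D] :|: [set (r, r)].
have rNR : r \in NR by rewrite inE nonrelay_r.
have cD : #|D| = #|NR| - 1 by rewrite (cardsD1 r NR) rNR /D; lia.
have cNR : 0 < #|NR| by apply/card_gt0P; exists r.
have cU : #|U| <= #|D| + #|D| + 1.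
  apply: leq_trans (leq_card_setU _ _).1 _; apply: leq_add; last by rewrite cards1.
  apply: leq_trans (leq_card_setU _ _).1 _; apply: leq_add; exact: leq_imset_card.
pose g := fun p : 'I_n * bool => (if p.2 then i2 G p.1 else i1 G p.1, p.1).
pose X := setX NR [set: bool].
have cX : #|X| = #|NR| * 2 by rewrite cardsX cardsT card_bool.
have cA : #|X| <= #|A|.
  rewrite -(card_in_imset (f := g)).
    apply: subset_leq_card; apply/subsetP => q /imsetP [[b t] bX ->].
    rewrite inE /g /=; move: bX; rewrite !inE /= andbT => Nb.
    have [h1 h2 _] := i12_spec hn SC Nb.
    by case: t; rewrite Nb ?h1 ?h2.
  move=> [b t] [b' t'] bX _; rewrite /g /= => -[e1 e2]; subst b'.
  move: bX; rewrite !inE /= andbT => Nb.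
  have [_ _ ne] := i12_spec hn SC Nb.
  by case: t t' e1 => [] [] // e1; [rewrite e1 eqxx in ne | rewrite e1 eqxx in ne].
have : ~~ (A \subset U).
  apply/negP => /subset_leq_card h; move: cU cA h; rewrite cX cD.
  move: cNR; set a := #|NR|; set b := #|U|; set c := #|A|; lia.
case/subsetPn => [[u w] uA nU]; move: uA; rewrite inE /= => /andP [Guw Nw].
exists u, w; split => //.
- apply/eqP => h; move: nU; by rewrite h !inE eqxx !orbT.
- move=> b Nb br; apply/eqP => h; move: nU; rewrite -h /U !inE.
  by rewrite (imset_f (fun b => (prv G r b, b))) // !inE br Nb.
- move=> x Nx xr; apply/eqP => h; move: nU; rewrite -h /U !inE.
  by rewrite (imset_f (exarc G r)) ?orbT // !inE xr Nx.
Qed.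

Lemma reach_all n (R : rel 'I_n) a p z :
  path R a p -> connect R (last a p) z -> all (fun y => connect R y z) (a :: p).
Proof.
elim: p a => [|y p IH] a /=; first by move=> _ ->.
case/andP => Ray pp h; have := IH y pp h => /= /andP [hy hp].
by rewrite hy hp (connect_trans (connect1 Ray) hy).
Qed.

Lemma ar1 a b n : a + b.+1 <= n -> a.+1 + b <= n.
Proof. lia. Qed.
Lemma ar2 a n : a.+1 <= n -> a <= n.
Proof. lia. Qed.
Lemma ar3 T a n t : a.+1 <= n -> T + (n - 1) <= t -> T + a <= t.
Proof. lia. Qed.
Lemma ar4 T n : T <= n -> T + (n - 1) <= 2 * n - 1.
Proof. lia. Qed.

Lemma loop_part n (G : rel 'I_n) : 2 <= n -> strongly_connected G -> has_loop G ->
  exists f : bfun n, admits G f /\ nilpotent_class_le f (2 * n - 1).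
Proof.
move=> hn SC [r Grr].
have [u [w [Guw Nw er He1 He2]]] := exists_arc hn SC Grr.
pose e := (u, w).
exists (fnet G e); split; first exact: fnet_admits.
exists (2 * n - 1); split => //.
exists [ffun _ => false] => x.
pose Z t := tr (fnet G e) x t.
have Ne : nonrelay G e.2 by [].
have HP1 := P1 SC Ne He1.
have HP2 := P2 hn SC Grr Ne He2.
pose Reach y := connect (good G e) y r.
have relay_step t a b : good G e a b -> ~~ nonrelay G b -> Z t.+1 b = Z t a.
  move=> gab Rb; have /andP [Gab abe] := gab.
  rewrite /Z trS; apply: fnet_relay => //; exact: relay_unique.
have relay_path : forall p a t, path (good G e) a p ->
    all (fun y => ~~ nonrelay G y) p -> Z (t + size p) (last a p) = Z t a.
  elim => [|y p IH] a t /=; first by rewrite addn0.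
  case/andP => gay pp /andP [Ry Rp]; rewrite addnS -addSn IH //.
  exact: relay_step.
have [q [pq lq uq]] := short_path (HP1 u).
have [s [p' [Rs pp' lp' allp' up']]] : exists s p', [/\ Reach s, path (good G e) s p',
    last s p' = u, all (fun y => ~~ Reach y) p' & uniq p'].
  case: (suffix_out Reach pq) => [allq | [a' [p'' [Ra pp lp allp sub]]]].
  - exists r, q; split => //; [exact: connect0 | by case/andP: uq].
  - exists a', p''; split => //; first by rewrite lp.
    by apply: subseq_uniq sub _; case/andP: uq.
have allR : all (fun y => ~~ nonrelay G y) p'.
  apply/allP => y yp; apply/negP => Ny; have := allP allp' y yp.
  by rewrite /Reach (HP2 _ Ny).
have [T Tn ZT] : exists2 T, T <= n & Z T r = false.
  case Zs: (Z 0 s).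
  - have Zu : Z (size p') u = true.
      by rewrite -lp' -(add0n (size p')) relay_path.
    have Zw : Z (size p').+1 w = false by rewrite /Z trS; apply: fnet_bad Zu.
    have [pw [ppw lpw upw]] := short_path (HP2 _ Nw).
    exists ((size p').+1 + size pw); last by rewrite -lpw; apply: tr_path0.
    have allw : all Reach (w :: pw) by apply: reach_all ppw _; rewrite lpw connect0.
    have : uniq (p' ++ w :: pw).
      rewrite cat_uniq; apply/and3P; split => //; apply/hasPn => y yw; apply/negP => yp.
      by have := allP allp' y yp; rewrite (allP allw y yw).
    move/uniq_size; rewrite size_cat /=; exact: ar1.
  - have [ps [pps lps ups]] := short_path Rs.
    exists (size ps); first by have := uniq_size ups; rewrite /=; exact: ar2.
    by rewrite -lps -(add0n (size ps)); apply: tr_path0.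
have absorb d : Z (T + d) r = false.
  elim: d => [|d IH]; first by rewrite addn0.
  rewrite addnS /Z trS; apply: fnet_good0 IH.
  by rewrite /good Grr /= eq_sym.
have absorb' t : T <= t -> Z t r = false by move=> h; rewrite -(subnKC h).
have final b t : T + (n - 1) <= t -> Z t b = false.
  have [pb [ppb lpb upb]] := short_path (HP1 b).
  move=> ht; rewrite -lpb; apply: (tr_path_persist ppb absorb').
  have := uniq_size upb; rewrite /= => h; exact: ar3 h ht.
apply/ffunP => b; rewrite ffunE; apply: final; exact: ar4.
Qed.


Theorem theorem4 (n : nat) (G : rel 'I_n) :
  2 <= n -> strongly_connected G ->
  (forall m, 1 <= m -> contains_wheel G m ->
     exists f : bfun n, admits G f /\ nilpotent_class_le f (2 * n - m + 1)) /\
  (has_loop G ->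
     exists f : bfun n, admits G f /\ nilpotent_class_le f (2 * n - 1)).
Proof.
move=> hn SC; split; last exact: loop_part.
move=> m hm W; case: (ltnP 1 m) => hm2; first exact: wheel_part.
have m1 : m = 1 by apply/eqP; rewrite eqn_leq hm2 hm.
subst m.
have [f [af [k [hk ck]]]] : exists f : bfun n, admits G f /\ nilpotent_class_le f (2 * n - 1).
  apply: loop_part => //.
  case: W => [v [c [_ [_ [cyc _]]]]].
  exists (c ord0); have := cyc ord0.
  by have -> : ordS (ord0 : 'I_1) = ord0 by apply/val_inj.
exists f; split => //; exists k; split => //.
by rewrite addn1; apply: leq_trans hk (leqnSn _).
Qed.
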